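(* With notation as in the context, for each $s\in\mathbb{S}_{p^n}$, $$w(s)=\min\{D(s,t):t\in\mathbb{S}_{p^n}(h),\ \mathfrak{a}(t)\succeq s\}.$$
   Context: Let $p$ be a prime, $n\ge1$, $\mathbb{S}_{p^n}=\{0,\dots,p^n-1\}$; write $s\in\mathbb{S}_{p^n}$ as $s=\sum_{i=1}^n s_{(n-i)}p^{n-i}$ with digits in $\{0,\dots,p-1\}$, and $s\preceq t$ means $s_{(n-i)}\le t_{(n-i)}$ for all $i$. Let $b_1,\dots,b_n$ be integers prime to $p$, $\mathfrak{b}(s)=\sum_i s_{(n-i)}p^{n-i}b_i$, and for $t\in\mathbb{Z}$ let $\mathfrak{a}(t)\in\mathbb{S}_{p^n}$ be the unique element with $\mathfrak{b}(\mathfrak{a}(t))\equiv-t\pmod{p^n}$. Fix $h\in\mathbb{Z}$, let $\mathbb{S}_{p^n}(h)=\{t\in\mathbb{Z}:h\le t<h+p^n\}$, and let $b\in\mathbb{S}_{p^n}(h)$ be the unique element with $\mathfrak{a}(b)=p^n-1$. For $s\in\mathbb{S}_{p^n}$, $t\in\mathbb{S}_{p^n}(h)$ define $D(s,t)=\lfloor(\mathfrak{b}(s)+t-h)/p^n\rfloor$, $d(s)=D(s,b)$, and $w(s)=\min\{d(u)-d(u-s):u\in\mathbb{S}_{p^n},\,u\succeq s\}$. *)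

(* Defs.v *)
From mathcomp Require Import all_boot all_order all_algebra.
Set Implicit Arguments. Unset Strict Implicit. Unset Printing Implicit Defensive.
Import Order.TTheory GRing.Theory Num.Theory.
Local Open Scope ring_scope.

Definition digit (p j s : nat) : nat := (s %/ p ^ j %% p)%N.

Definition dominated (p n s u : nat) : bool :=
  [forall j : 'I_n, (digit p j s <= digit p j u)%N].

Definition bfrak (p n : nat) (b : nat -> int) (s : nat) : int :=
  \sum_(1 <= i < n.+1) ((digit p (n - i) s * p ^ (n - i))%N)%:Z * b i.

Definition afrak (p n : nat) (b : nat -> int) (t : int) : nat :=
  odflt 0%N (omap val
    [pick s : 'I_(p ^ n) | ((bfrak p n b s + t) %% (p ^ n)%:Z)%Z == 0]).

Definition bstar (p n : nat) (b : nat -> int) (h : int) : int :=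
  h + (odflt 0%N (omap val
    [pick k : 'I_(p ^ n) | afrak p n b (h + k%:Z) == (p ^ n).-1]))%:Z.

Definition Dfl (p n : nat) (b : nat -> int) (h : int) (s : nat) (t : int) : int :=
  ((bfrak p n b s + t - h) %/ (p ^ n)%:Z)%Z.

Definition dfl (p n : nat) (b : nat -> int) (h : int) (s : nat) : int :=
  Dfl p n b h s (bstar p n b h).

Definition seqmin (l : seq int) : int := foldr Order.min (head 0 l) l.

Definition Sp (p n : nat) : seq nat := iota 0 (p ^ n).
Definition Sph (p n : nat) (h : int) : seq int := [seq h + k%:Z | k <- iota 0 (p ^ n)].

Definition wfun (p n : nat) (b : nat -> int) (h : int) (s : nat) : int :=
  seqmin [seq dfl p n b h u - dfl p n b h (u - s)%N | u <- Sp p n & dominated p n s u].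

(* Main.v *)
Require Import Defs.
From mathcomp Require Import all_boot all_order all_algebra.
From mathcomp Require Import zify ring.
Import Order.TTheory GRing.Theory Num.Theory.

Lemma digit_lt p j x : 0 < p -> digit p j x < p.
Proof. by move=> p0; rewrite /digit ltn_pmod. Qed.

Lemma digitS p j x : 0 < p -> digit p j.+1 x = digit p j (x %/ p).
Proof. by move=> p0; rewrite /digit expnS divnMA. Qed.

Lemma digit_expand p n x : 0 < p -> x < p ^ n -> x = \sum_(j < n) digit p j x * p ^ j.
Proof.
move=> p0; elim: n x => [|n IH] x hx.
  by rewrite big_ord0; move: hx; rewrite expn0; case: x.
rewrite big_ord_recl /= expn0 muln1.
under eq_bigr => i _ do rewrite /bump /= add1n digitS // expnS mulnCA.
rewrite -big_distrr /= -IH.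
  idtac.
  by rewrite /digit expn0 divn1 {1}(divn_eq x p) addnC mulnC.
by rewrite ltn_divLR // mulnC -expnS.
Qed.

Lemma digit_sum p n (d : nat -> nat) : 0 < p -> (forall j, j < n -> d j < p) ->
  (\sum_(i < n) d i * p ^ i < p ^ n) /\
  forall j, j < n -> digit p j (\sum_(i < n) d i * p ^ i) = d j.
Proof.
move=> p0; elim: n d => [|n IH] d hd.
  by split=> //; rewrite big_ord0 expn0.
have [IH1 IH2] := IH (fun i => d i.+1) (fun j hj => hd j.+1 hj).
rewrite big_ord_recl /= expn0 muln1.
have -> : \sum_(i < n) d (bump 0 i) * p ^ bump 0 i = p * \sum_(i < n) d i.+1 * p ^ i.
  rewrite big_distrr; apply: eq_bigr => i _.
  by rewrite /bump /= add1n expnS mulnCA.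
set R := \sum_(i < n) _ in IH1 IH2 *.
have d0 := hd 0 isT.
split.
  rewrite expnS; move: IH1; set m := p ^ n => h1; nia.
case=> [|j] hj.
  by rewrite /digit expn0 divn1 addnC mulnC modnMDl modn_small.
rewrite digitS // addnC mulnC divnMDl // divn_small // addn0.
exact: IH2.
Qed.


Lemma geom_sum p n : 0 < p -> \sum_(j < n) (p - 1) * p ^ j = (p ^ n).-1.
Proof.
move=> p0; elim: n => [|n IH]; first by rewrite big_ord0 expn0.
rewrite big_ord_recr /= IH expnS.
have : 0 < p ^ n by rewrite expn_gt0 p0.
set m := p ^ n => hm; nia.
Qed.

Lemma digit_max p n j : 0 < p -> j < n -> digit p j (p ^ n).-1 = p - 1.
Proof.
move=> p0 hj; rewrite -geom_sum //.
have hlt : forall i, i < n -> p - 1 < p by move=> *; lia.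
by have [_ ->] := @digit_sum p n (fun _ => p - 1) p0 hlt.
Qed.

Arguments digit_expand {p n x}.
Lemma digit_sub p n u s : 0 < p -> u < p ^ n -> s < p ^ n -> dominated p n s u ->
  u - s = \sum_(j < n) (digit p j u - digit p j s) * p ^ j /\
  forall j, j < n -> digit p j (u - s) = digit p j u - digit p j s.
Proof.
move=> p0 hu hs /forallP hdom.
have hd : forall j, j < n -> digit p j s <= digit p j u.
  by move=> j hj; exact: (hdom (Ordinal hj)).
have e : u - s = \sum_(j < n) (digit p j u - digit p j s) * p ^ j.
  apply/eqP; rewrite -(eqn_add2r s) subnK.
    rewrite {1}(digit_expand p0 hu) {2}(digit_expand p0 hs) -big_split /=.
    apply/eqP; apply: eq_bigr => i _; rewrite -mulnDl subnK //; exact: hd.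
  rewrite (digit_expand p0 hu) (digit_expand p0 hs).
  by apply: leq_sum => i _; rewrite leq_mul2r hd ?orbT.
split=> // j hj; rewrite e.
have hlt : forall i, i < n -> digit p i u - digit p i s < p.
  move=> i _; have := @digit_lt p i u p0; lia.
by have [_ ->] := @digit_sum p n (fun j => digit p j u - digit p j s) p0 hlt.
Qed.

Lemma digit_add p n v s : 0 < p -> v < p ^ n -> s < p ^ n ->
  (forall j, j < n -> digit p j v + digit p j s < p) ->
  v + s < p ^ n /\ forall j, j < n -> digit p j (v + s) = digit p j v + digit p j s.
Proof.
move=> p0 hv hs hd.
have e : v + s = \sum_(j < n) (digit p j v + digit p j s) * p ^ j.
  rewrite {1}(digit_expand p0 hv) {1}(digit_expand p0 hs) -big_split /=.
  by apply: eq_bigr => i _; rewrite mulnDl.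
rewrite e; exact: digit_sum.
Qed.

Local Open Scope ring_scope.
Lemma bfrak_add p n b x y z :
  (forall j, (j < n)%N -> digit p j x = (digit p j y + digit p j z)%N) ->
  bfrak p n b x = bfrak p n b y + bfrak p n b z.
Proof.
move=> hd; rewrite /bfrak -big_split /=; apply: eq_big_nat => i /andP [hi1 hi2].
rewrite hd; last lia.
by rewrite mulnDl PoszD GRing.mulrDl.
Qed.

Local Open Scope ring_scope.

Lemma small_dvd p (a c : nat) : (0 < p)%N -> (a < p)%N -> (c < p)%N ->
  (p%:Z %| a%:Z - c%:Z)%Z -> a = c.
Proof.
move=> p0 ha hc; rewrite dvdzE /=.
have [hle|hlt] := leqP c a.
  rewrite subzn // absz_nat => hd.
  case: (posnP (a - c)) => h; first lia.
  have := dvdn_leq h hd; lia.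
rewrite -opprB subzn ?(ltnW hlt) // abszN absz_nat => hd.
case: (posnP (c - a)) => h; first lia.
have := dvdn_leq h hd; lia.
Qed.

Lemma modinj p n (c : nat -> int) (d e : nat -> nat) : prime p ->
  (forall j, (j < n)%N -> coprimez (c j) p) ->
  (forall j, (j < n)%N -> d j < p /\ e j < p)%N ->
  ((p ^ n)%:Z %| \sum_(j < n) ((d j)%:Z - (e j)%:Z) * (p ^ j)%:Z * c j)%Z ->
  forall j, (j < n)%N -> d j = e j.
Proof.
move=> pp; have p0 := prime_gt0 pp.
elim: n c d e => [|n IH] c d e hc hde hdvd j hj //.
rewrite big_ord_recl /= expn0 mulr1 in hdvd.
have eS : \sum_(i < n) ((d (bump 0 i))%:Z - (e (bump 0 i))%:Z) * (p ^ bump 0 i)%:Z * c (bump 0 i)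
   = p%:Z * \sum_(i < n) ((d i.+1)%:Z - (e i.+1)%:Z) * (p ^ i)%:Z * c i.+1.
  rewrite big_distrr; apply: eq_bigr => i _.
  rewrite /bump /= add1n expnS PoszM; ring.
rewrite eS in hdvd.
set S := \sum_(i < n) _ in hdvd.
have h0 : d 0%N = e 0%N.
  have [hd0 he0] := hde 0%N isT.
  apply: (@small_dvd p _ _ p0 hd0 he0).
  rewrite -(@Gauss_dvdzl _ _ (c 0%N)); last by rewrite coprimez_sym; exact: hc.
  have -> : ((d 0%N)%:Z - (e 0%N)%:Z) * c 0%N = (((d 0%N)%:Z - (e 0%N)%:Z) * c 0%N + p%:Z * S) - p%:Z * S by ring.
  apply: rpredB; last first.
  exact: (dvdz_mulr S (dvdzz p%:Z)).
  apply: dvdz_trans hdvd; rewrite expnS PoszM; exact: dvdz_mulr.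
case: j hj => [|j] hj; first exact: h0.
apply: (IH (fun i => c i.+1) (fun i => d i.+1) (fun i => e i.+1)) => //.
- by move=> i hi; apply: hc.
- by move=> i hi; apply: hde.
rewrite h0 subrr mul0r add0r expnS PoszM in hdvd.
by rewrite -(@dvdz_mul2l p%:Z) // -lt0n.
Qed.

Local Open Scope ring_scope.

Lemma bfrak_rev p n b x :
  bfrak p n b x = \sum_(j < n) (digit p j x * p ^ j)%N%:Z * b (n - j)%N.
Proof.
rewrite /bfrak big_add1 /= big_nat_rev /= big_mkord; apply: eq_bigr => [[i hi]] _ /=.
have e1 : (0 + n - i.+1).+1 = (n - i)%N by lia.
have e2 : (n - (n - i) = i)%N by lia.
by rewrite e1 e2.
Qed.

Lemma bfrak_inj p n b x y : prime p ->
  (forall i : nat, (1 <= i <= n)%N -> coprimez (b i) p%:Z) ->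
  (x < p ^ n)%N -> (y < p ^ n)%N ->
  ((p ^ n)%:Z %| bfrak p n b x - bfrak p n b y)%Z -> x = y.
Proof.
move=> pp hb hx hy hd; have p0 := prime_gt0 pp.
have hdig : forall j, (j < n)%N -> digit p j x = digit p j y.
  apply: (@modinj p n (fun j => b (n - j)%N) (fun j => digit p j x) (fun j => digit p j y) pp).
  - by move=> j hj; apply: hb; lia.
  - by move=> j _; split; apply: digit_lt.
  move: hd; rewrite !bfrak_rev -sumrB.
  congr (_ %| _)%Z; apply: eq_bigr => i _; rewrite !PoszM; ring.
rewrite (digit_expand p0 hx) (digit_expand p0 hy).
by apply: eq_bigr => [[i hi]] _ /=; rewrite hdig.
Qed.

Lemma bfrak_surj p n b r : prime p ->
  (forall i : nat, (1 <= i <= n)%N -> coprimez (b i) p%:Z) ->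
  exists2 x, (x < p ^ n)%N & ((p ^ n)%:Z %| bfrak p n b x - r)%Z.
Proof.
move=> pp hb; have p0 := prime_gt0 pp.
have N0 : (0 < p ^ n)%N by rewrite expn_gt0 p0.
have NZ : (p ^ n)%:Z != 0 by rewrite -lt0n.
set N := (p ^ n)%N in N0 NZ *.
pose g x := `|(bfrak p n b x %% N%:Z)%Z|%N.
have gE : forall z : int, (`|(z %% N%:Z)%Z|%N)%:Z = (z %% N%:Z)%Z.
  by move=> z; rewrite gez0_abs // modz_ge0.
have glt : forall z : int, (`|(z %% N%:Z)%Z|%N < N)%N.
  by move=> z; rewrite -ltz_nat gE ltz_pmod // ltz_nat.
have U : uniq (map g (iota 0 N)).
  rewrite map_inj_in_uniq ?iota_uniq // => x y; rewrite !mem_iota !add0n => hx hy e.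
  apply: (@bfrak_inj p n b) => //.
  rewrite -eqz_mod_dvd; apply/eqP; rewrite -[LHS]gE -[RHS]gE; congr Posz; exact: e.
have sub : {subset map g (iota 0 N) <= iota 0 N}.
  by move=> z /mapP [x _ ->]; rewrite mem_iota add0n; exact: glt.
have [_ E] := uniq_min_size U sub (eq_leq (esym (size_map g (iota 0 N)))).
have : (`|(r %% N%:Z)%Z|%N \in map g (iota 0 N)) by rewrite E mem_iota add0n glt.
case/mapP => x; rewrite mem_iota add0n => hx e.
exists x => //; rewrite -eqz_mod_dvd; apply/eqP; rewrite -[LHS]gE -[RHS]gE; congr Posz; by rewrite e.
Qed.

Local Open Scope ring_scope.

Lemma dvd_modsub (X N : int) : (N %| (X %% N)%Z - X)%Z.
Proof.
rewrite {2}(divz_eq X N).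
have -> : (X %% N)%Z - ((X %/ N)%Z * N + (X %% N)%Z) = - ((X %/ N)%Z * N) by ring.
by rewrite dvdzE abszN -dvdzE; apply: dvdz_mull; exact: dvdzz.
Qed.

Lemma absmod (z : int) (N : nat) : (0 < N)%N -> ((`|(z %% N%:Z)%Z|%N)%:Z = (z %% N%:Z)%Z) /\ (`|(z %% N%:Z)%Z| < N)%N.
Proof.
move=> N0; have NZ : N%:Z != 0 by rewrite -lt0n.
have e : (`|(z %% N%:Z)%Z|%N)%:Z = (z %% N%:Z)%Z by rewrite gez0_abs // modz_ge0.
by split=> //; rewrite -ltz_nat e ltz_pmod // ltz_nat.
Qed.

Lemma afrak_spec p n b t : prime p ->
  (forall i : nat, (1 <= i <= n)%N -> coprimez (b i) p%:Z) ->
  (afrak p n b t < p ^ n)%N /\ ((p ^ n)%:Z %| bfrak p n b (afrak p n b t) + t)%Z.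
Proof.
move=> pp hb; rewrite /afrak; case: pickP => [s hs | hnone] /=.
  by split; [exact: ltn_ord | apply/dvdz_mod0P/eqP].
have [x hx hd] := @bfrak_surj p n b (- t) pp hb.
have := hnone (Ordinal hx); rewrite /= opprK in hd.
by move/dvdz_mod0P: hd => ->; rewrite eqxx.
Qed.

Lemma afrak_uniq p n b t x : prime p ->
  (forall i : nat, (1 <= i <= n)%N -> coprimez (b i) p%:Z) ->
  (x < p ^ n)%N -> ((p ^ n)%:Z %| bfrak p n b x + t)%Z -> afrak p n b t = x.
Proof.
move=> pp hb hx hd; have [ha hda] := @afrak_spec p n b t pp hb.
apply: (@bfrak_inj p n b) => //.
have -> : bfrak p n b (afrak p n b t) - bfrak p n b x =
  (bfrak p n b (afrak p n b t) + t) - (bfrak p n b x + t) by ring.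
exact: rpredB.
Qed.

Lemma bstar_spec p n b h : prime p ->
  (forall i : nat, (1 <= i <= n)%N -> coprimez (b i) p%:Z) ->
  ((p ^ n)%:Z %| bfrak p n b (p ^ n).-1 + bstar p n b h)%Z.
Proof.
move=> pp hb; have p0 := prime_gt0 pp.
have N0 : (0 < p ^ n)%N by rewrite expn_gt0 p0.
rewrite /bstar; case: pickP => [k /eqP hk | hnone] /=.
  by have [_ ] := @afrak_spec p n b (h + (val k)%:Z) pp hb; rewrite hk.
exfalso.
set X := - bfrak p n b (p ^ n).-1 - h.
have [e1 e2] := @absmod X _ N0.
have := hnone (Ordinal e2); rewrite /=.
rewrite (@afrak_uniq p n b _ (p ^ n).-1 pp hb) ?eqxx //.
  by rewrite prednK // leqnn.
rewrite e1.
have -> : bfrak p n b (p ^ n).-1 + (h + (X %% (p ^ n)%:Z)%Z) = (X %% (p ^ n)%:Z)%Z - X.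
  rewrite /X; ring.
exact: dvd_modsub.
Qed.

Local Open Scope ring_scope.

Lemma foldr_min (x0 : int) l :
  (forall y, y \in l -> foldr Order.min x0 l <= y) /\ foldr Order.min x0 l <= x0
  /\ (foldr Order.min x0 l \in x0 :: l).
Proof.
elim: l => [|a l [IH1 [IH2 IH3]]] /=; first by rewrite lexx inE eqxx.
set F := foldr _ _ _ in IH1 IH2 IH3 *.
rewrite minEle; case: (leP a F) => haF.
  split; [move=> y; rewrite inE => /orP [/eqP -> //| /IH1]; exact: le_trans|].
  split; [exact: le_trans haF IH2| by rewrite !inE eqxx orbT].
split; [move=> y; rewrite inE => /orP [/eqP -> |/IH1 //]; exact: ltW|].
split=> //; move: IH3; rewrite !inE => /orP [->//|->]; by rewrite !orbT.
Qed.

Lemma seqmin_spec (l : seq int) : l != [::] ->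
  seqmin l \in l /\ forall y, y \in l -> seqmin l <= y.
Proof.
case: l => [//|a l] _; have -> : seqmin (a :: l) = foldr Order.min a (a :: l) by [].
have [H1 [H2 H3]] := foldr_min a (a :: l).
split; last exact: H1.
by move: H3; rewrite inE => /orP [/eqP -> /=|]; rewrite ?inE ?eqxx.
Qed.

Lemma seqmin_eq (l1 l2 : seq int) : l1 != [::] ->
  {subset l1 <= l2} -> {subset l2 <= l1} -> seqmin l1 = seqmin l2.
Proof.
move=> n1 s12 s21.
have n2 : l2 != [::].
  case: l1 n1 s12 s21 => // a l1 _ s12 _; have := s12 a; rewrite inE eqxx => /(_ isT).
  by case: l2 s12.
have [m1 h1] := @seqmin_spec l1 n1; have [m2 h2] := @seqmin_spec l2 n2.
apply: le_anti; apply/andP; split; [apply: h1; exact: s21 | apply: h2; exact: s12].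
Qed.

Local Open Scope ring_scope.

Lemma dfl_diff p n b h u v s t q : (0 < p ^ n)%N ->
  bfrak p n b u = bfrak p n b v + bfrak p n b s ->
  0 <= t - h < (p ^ n)%N%:Z ->
  bfrak p n b v + bstar p n b h - h = (t - h) + q * (p ^ n)%N%:Z ->
  dfl p n b h u - dfl p n b h v = Dfl p n b h s t.
Proof.
move=> N0 hu ht hv; have NZ : (p ^ n)%N%:Z != 0 by rewrite -lt0n.
rewrite /dfl /Dfl hu.
have -> : bfrak p n b v + bfrak p n b s + bstar p n b h - h
  = q * (p ^ n)%N%:Z + (bfrak p n b s + t - h).
  by rewrite -[bfrak p n b v + _ + _ - _]/(bfrak p n b v + bfrak p n b s + bstar p n b h - h)
     (_ : _ + _ + _ - _ = (bfrak p n b v + bstar p n b h - h) + bfrak p n b s); [rewrite hv; ring | ring].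
rewrite hv addrC divzMDl // [t - h + _]addrC divzMDl // divz_small //; first ring.
Qed.

Local Open Scope ring_scope.

Theorem corollary3p9 (p n : nat) (b : nat -> int) (h : int) :
  prime p -> (0 < n)%N ->
  (forall i : nat, (1 <= i <= n)%N -> coprimez (b i) p%:Z) ->
  forall s : nat, (s < p ^ n)%N ->
  wfun p n b h s =
  seqmin [seq Dfl p n b h s t | t <- Sph p n h & dominated p n s (afrak p n b t)].
Proof.
move=> pp n0 hb s hs; have p0 := prime_gt0 pp.
have N0 : (0 < p ^ n)%N by rewrite expn_gt0 p0.
have NZ : (p ^ n)%N%:Z != 0 by rewrite -lt0n.
have pn1 : ((p ^ n).-1 < p ^ n)%N by rewrite prednK.
have domP : forall x y, reflect (forall j, (j < n)%N -> (digit p j x <= digit p j y)%N)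
    (dominated p n x y).
  move=> x y; apply: (iffP forallP) => H.
    by move=> j hj; exact: (H (Ordinal hj)).
  by move=> [j hj]; exact: H.
have dommax : forall x, dominated p n x (p ^ n).-1.
  move=> x; apply/domP => j hj; rewrite digit_max //; have := @digit_lt p j x p0; lia.
have bst := @bstar_spec p n b h pp hb.
apply: seqmin_eq.
- have hmem : dfl p n b h s - dfl p n b h (s - s)%N \in
      [seq dfl p n b h u - dfl p n b h (u - s)%N | u <- Sp p n & dominated p n s u].
    apply: map_f; rewrite mem_filter mem_iota add0n hs andbT.
    by rewrite andbT; apply/domP => j _.
  by apply/eqP => E; rewrite E in hmem.
- move=> z /mapP [u]; rewrite mem_filter /Sp mem_iota add0n /= => /andP [hsu0 hu] ->.
  have hsu := elimT (domP _ _) hsu0.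
  set v := (u - s)%N.
  have hv : (v < p ^ n)%N by apply: leq_ltn_trans (leq_subr _ _) hu.
  have [_ dv] := @digit_sub p n u s p0 hu hs (introT (domP _ _) hsu).
  set a := ((p ^ n).-1 - v)%N.
  have ha : (a < p ^ n)%N by apply: leq_ltn_trans (leq_subr _ _) pn1.
  have [_ da] := @digit_sub p n (p ^ n).-1 v p0 pn1 hv (dommax v).
  have bmax : bfrak p n b (p ^ n).-1 = bfrak p n b a + bfrak p n b v.
    apply: bfrak_add => j hj; rewrite da // digit_max //.
    have := @digit_lt p j v p0; lia.
  have bu : bfrak p n b u = bfrak p n b v + bfrak p n b s.
    apply: bfrak_add => j hj; rewrite dv //; have := hsu j hj; lia.
  set X := bfrak p n b v + bstar p n b h - h.
  have [e1 e2] := @absmod X _ N0.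
  set k := `|(X %% (p ^ n)%N%:Z)%Z|%N in e1 e2.
  have hat : afrak p n b (h + k%:Z) = a.
    apply: afrak_uniq => //.
    have -> : bfrak p n b a + (h + k%:Z) =
      (bfrak p n b (p ^ n).-1 + bstar p n b h) + ((X %% (p ^ n)%N%:Z)%Z - X).
      by rewrite e1 bmax /X; ring.
    by apply: rpredD => //; exact: dvd_modsub.
  have -> : dfl p n b h u - dfl p n b h v = Dfl p n b h s (h + k%:Z).
    apply: (@dfl_diff p n b h u v s _ ((X %/ (p ^ n)%N%:Z)%Z)) => //.
      rewrite addrC addKr e1 modz_ge0 //= ltz_pmod //; lia.
    have -> : h + k%:Z - h = k%:Z by ring.
    by rewrite e1 [RHS]addrC -divz_eq.
  apply: map_f; rewrite mem_filter hat; apply/andP; split.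
    apply/domP => j hj; rewrite da // dv // digit_max //.
    have := @digit_lt p j u p0; have := hsu j hj; lia.
  by apply: map_f; rewrite mem_iota add0n.
- move=> z /mapP [t0]; rewrite mem_filter /= => /andP [hsa0 /mapP [k hk Et]] ->; subst t0.
  have hsa := elimT (domP _ _) hsa0.
  rewrite mem_iota add0n in hk.
  set t := h + k%:Z in hsa *.
  have [ha hda] := @afrak_spec p n b t pp hb.
  set a := afrak p n b t in ha hda hsa.
  set v := ((p ^ n).-1 - a)%N.
  have hv : (v < p ^ n)%N by apply: leq_ltn_trans (leq_subr _ _) pn1.
  have [_ dv] := @digit_sub p n (p ^ n).-1 a p0 pn1 ha (dommax a).
  have hvs : forall j, (j < n)%N -> (digit p j v + digit p j s < p)%N.
    move=> j hj; rewrite dv // digit_max //.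
    have := hsa j hj; have := @digit_lt p j a p0; lia.
  have [hu du] := @digit_add p n v s p0 hv hs hvs.
  have bmax : bfrak p n b (p ^ n).-1 = bfrak p n b v + bfrak p n b a.
    apply: bfrak_add => j hj; rewrite dv // digit_max //.
    have := @digit_lt p j a p0; lia.
  have bu : bfrak p n b (v + s) = bfrak p n b v + bfrak p n b s by apply: bfrak_add.
  have [q1 eq1] := dvdzP hda.
  have [q2 eq2] := dvdzP bst.
  have -> : Dfl p n b h s t = dfl p n b h (v + s) - dfl p n b h (v + s - s)%N.
    rewrite addnK; symmetry; apply: (@dfl_diff p n b h (v + s) v s _ (q2 - q1)) => //.
      rewrite /t addrC addKr; apply/andP; split => //; rewrite ltz_nat //.
    have eb : bfrak p n b v = bfrak p n b (p ^ n).-1 - bfrak p n b a by rewrite bmax; ring.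
    have ea : bfrak p n b a = q1 * (p ^ n)%N%:Z - t by rewrite -eq1; ring.
    have eb2 : bfrak p n b (p ^ n).-1 = q2 * (p ^ n)%N%:Z - bstar p n b h by rewrite -eq2; ring.
    rewrite eb ea eb2; ring.
  apply: map_f; rewrite mem_filter /Sp mem_iota add0n hu andbT /=.
  rewrite andbT; apply/domP => j hj; rewrite du //; lia.
Qed.
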